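(* There is a constant $c$ such that for every $n\in\mathbb{N}_{\ge1}$ there exists a language $L_n$ recognized by a deterministic weak Muller automaton $\mathfrak{A}_n$ with explicitly represented acceptance family, of size at most $c\cdot n$, such that Player $O$ wins $\Gamma_f(L_n)$ for some constant delay function $f$, but Player $I$ wins $\Gamma_g(L_n)$ for every delay function $g$ with $g(0)\le 2^n$.
   Context: An $\omega$-automaton $\mathfrak{A}=(Q,\Sigma,q_I,\Delta,\mathrm{Acc})$ has finite state set $Q$, alphabet $\Sigma$, initial state $q_I$, transitions $\Delta\subseteq Q\times\Sigma\times Q$, accepting runs $\mathrm{Acc}\subseteq\Delta^\omega$; $L(\mathfrak{A})$ is the set of words processed by an initial accepting run. Deterministic means $\Delta$ is a total function $Q\times\Sigma\to Q$. A weak Muller automaton has $\mathcal{F}\subseteq 2^Q$ and accepts runs whose set of visited states lies in $\mathcal{F}$. With explicit representation ($\mathcal{F}$ listed element by element), its size is $|Q|+|\mathcal{F}|$. A delay function is $f:\mathbb{N}\to\mathbb{N}_{\ge1}$; it is constant if $f(i)=1$ for all $i>0$. In the delay game $\Gamma_f(L)$, $L\subseteq(\Sigma_I\times\Sigma_O)^\omega$, in round $i=0,1,\dots$ Player $I$ picks $u_i\in\Sigma_I^{f(i)}$ and then Player $O$ picks $v_i\in\Sigma_O$; $O$ wins the play iff $\binom{u_0u_1\cdots}{v_0v_1\cdots}\in L$. Strategies: $\tau_I:\Sigma_O^*\to\Sigma_I^*$ with $|\tau_I(w)|=f(|w|)$, $\tau_O:\Sigma_I^+\to\Sigma_O$;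 a player wins the game if she/he has a strategy winning all consistent plays. *)

(* Defs.v *)
From mathcomp Require Import all_boot.
Set Implicit Arguments. Unset Strict Implicit. Unset Printing Implicit Defensive.

Definition word (A : Type) := nat -> A.
Definition language (A : Type) := word A -> Prop.

Record DWMA (A : Type) := MkDWMA {
  dw_state : finType;
  dw_init : dw_state;
  dw_trans : dw_state -> A -> dw_state;
  dw_acc : {set {set dw_state}}
}.

Fixpoint dw_run A (M : DWMA A) (w : word A) (n : nat) : dw_state M :=
  match n with
  | 0 => dw_init M
  | m.+1 => dw_trans (dw_run M w m) (w m)
  end.

Definition dw_lang A (M : DWMA A) : language A :=
  fun w => exists2 S, S \in dw_acc M &
    forall q, q \in S <-> exists i, dw_run M w i = q.

Definition dw_size A (M : DWMA A) : nat := #|dw_state M| + #|dw_acc M|.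

Definition delay_fun (f : nat -> nat) : Prop := forall i, 0 < f i.
Definition constant_delay (f : nat -> nat) : Prop := forall i, 0 < i -> f i = 1.

Definition prefix A (a : word A) (n : nat) : seq A := map a (iota 0 n).
Definition slice A (a : word A) (m n : nat) : seq A := map a (iota m n).
(* total number of input letters picked by I in rounds 0..i-1 *)
Definition offs (f : nat -> nat) (i : nat) : nat := \sum_(j < i) f j.

(* A play of Gamma_f(L) is described by the input word a = u_0 u_1 ... (with
   |u_i| = f i, so u_i = slice a (offs f i) (f i)) and the output word b = v_0 v_1 ... *)
Definition consistent_I SI SO (f : nat -> nat) (tI : seq SO -> seq SI)
  (a : word SI) (b : word SO) : Prop :=
  forall i, tI (prefix b i) = slice a (offs f i) (f i).

Definition consistent_O SI SO (f : nat -> nat) (tO : seq SI -> SO)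
  (a : word SI) (b : word SO) : Prop :=
  forall i, b i = tO (prefix a (offs f i.+1)).

Definition outcome SI SO (a : word SI) (b : word SO) : word (SI * SO) :=
  fun k => (a k, b k).

Definition O_wins SI SO (f : nat -> nat) (L : language (SI * SO)) : Prop :=
  exists tO : seq SI -> SO,
    forall a b, consistent_O f tO a b -> L (outcome a b).

Definition I_wins SI SO (f : nat -> nat) (L : language (SI * SO)) : Prop :=
  exists tI : seq SO -> seq SI,
    (forall w, size (tI w) = f (size w)) /\
    forall a b, consistent_I f tI a b -> ~ L (outcome a b).

(* Main.v *)
Require Import Defs.
From mathcomp Require Import all_boot zify.
Set Implicit Arguments. Unset Strict Implicit. Unset Printing Implicit Defensive.

Notation St m := (option (('I_m * bool) + bool)%type).

Definition wstep m (j x : 'I_m) (mk : bool) : St m :=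
  if mk then (if x == j then Some (inl (j, true)) else Some (inr false))
  else Some (inl (j, false)).

Definition trans m (q : St m) (l : 'I_m * ('I_m * bool)) : St m :=
  match q with
  | None => wstep l.2.1 l.1 l.2.2
  | Some (inl (j, false)) => wstep j l.1 l.2.2
  | Some (inl (j, true)) =>
      if (nat_of_ord l.1 < nat_of_ord j)%N then Some (inl (j, true)) else Some (inr (l.1 == j))
  | Some (inr b) => Some (inr b)
  end.

Definition A1 m (j : 'I_m) : {set St m} :=
  [set None; Some (inl (j, false)); Some (inl (j, true)); Some (inr true)].
Definition A2 m (j : 'I_m) : {set St m} :=
  [set None; Some (inl (j, true)); Some (inr true)].
Definition Facc m : {set {set St m}} :=
  [set A1 j | j : 'I_m] :|: [set A2 j | j : 'I_m].
Definition Mach m : DWMA ('I_m * ('I_m * bool)) :=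
  MkDWMA (None : St m) (@trans m) (Facc m).

Lemma size_Mach m : dw_size (Mach m) <= 4 * m + 3.
Proof.
rewrite /dw_size /= card_option card_sum card_prod card_ord card_bool.
have : #|Facc m| <= m + m.
  rewrite /Facc; apply: (@leq_trans (#|[set A1 j | j : 'I_m]| + #|[set A2 j | j : 'I_m]|)).
    by rewrite -cardsUI leq_addr.
  by apply: leq_add; apply: leq_trans (leq_imset_card _ _) _; rewrite card_ord.
move: (#|Facc m|) => k H; lia.
Qed.

Lemma acc_in m S : S \in Facc m -> Some (inr true) \in S.
Proof.
by rewrite inE => /orP [] /imsetP [j _ ->]; rewrite !inE eqxx ?orbT.
Qed.

Lemma bad_exists k : forall s (a : nat -> nat),
  (forall r, s <= r < s + 2 ^ k -> a r < k) ->
  exists p q, [/\ s <= p, p < q, q < s + 2 ^ k, a p = a q &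
     forall r, p < r < q -> a r < a p].
Proof.
elim: k => [|k IH] s a Ha.
  by have := Ha s; rewrite expn0 addn1 leqnn ltnSn => /(_ isT).
have E : 2 ^ k.+1 = 2 ^ k + 2 ^ k by rewrite expnS mul2n -addnn.
case: (boolP [exists r : 'I_(2^k), a (s + r) == k]) => [/existsP [p0 /eqP Hp0]|/existsPn H1].
  case: (boolP [exists r : 'I_(2^k), a (s + 2^k + r) == k]) => [/existsP [q0 /eqP Hq0]|/existsPn H2].
    have ex : exists r, (s + p0 < r) && (a r == k).
      exists (s + 2^k + q0); rewrite Hq0 eqxx andbT; have := ltn_ord p0; lia.
    case: (ex_minnP ex) => q /andP [lt1 /eqP aq] Hmin.
    have qle : q <= s + 2^k + q0.
      apply: Hmin; rewrite Hq0 eqxx andbT; have := ltn_ord p0; lia.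
    exists (s + p0), q; split => //; first lia.
    - have := ltn_ord q0; lia.
    - by rewrite Hp0 aq.
    move=> r /andP [h1 h2]; rewrite Hp0.
    have : a r < k.+1 by apply: Ha; have := ltn_ord q0; lia.
    rewrite ltnS leq_eqVlt => /orP [/eqP ar|//].
    have := Hmin r; rewrite h1 ar eqxx /= => /(_ isT); lia.
  have [|p [q [h1 h2 h3 h4 h5]]] := IH (s + 2^k) a.
    move=> r /andP [r1 r2].
    have : a r < k.+1 by apply: Ha; lia.
    rewrite ltnS leq_eqVlt => /orP [/eqP ar|//].
    have rlt : r - s - 2^k < 2^k by lia.
    have := H2 (Ordinal rlt); rewrite /=.
    have -> : s + 2 ^ k + (r - s - 2 ^ k) = r by lia.
    by rewrite ar eqxx.
  exists p, q; split => //; lia.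
have [|p [q [h1 h2 h3 h4 h5]]] := IH s a.
  move=> r /andP [r1 r2].
  have : a r < k.+1 by apply: Ha; lia.
  rewrite ltnS leq_eqVlt => /orP [/eqP ar|//].
  have rlt : r - s < 2^k by lia.
  have := H1 (Ordinal rlt); rewrite /=.
  have -> : s + (r - s) = r by lia.
  by rewrite ar eqxx.
exists p, q; split => //; lia.
Qed.

Lemma ruler_sep p q : p < q -> logn 2 p.+1 = logn 2 q.+1 ->
  exists r, p < r < q /\ logn 2 p.+1 < logn 2 r.+1.
Proof.
move=> pq E.
set t := logn 2 p.+1.
have T0 : 0 < 2 ^ t by rewrite expn_gt0.
have dp : 2 ^ t %| p.+1 by apply: pfactor_dvdnn.
have dq : 2 ^ t %| q.+1 by rewrite /t E; apply: pfactor_dvdnn.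
have oddx x : logn 2 x.+1 = t -> odd (x.+1 %/ 2 ^ t).
  move=> Hx; apply/negP => /negP; rewrite -dvdn2 => H2.
  have : 2 ^ t.+1 %| x.+1.
    have dx : 2 ^ t %| x.+1 by rewrite -Hx; apply: pfactor_dvdnn.
    rewrite -(divnK dx) expnSr (mulnC (2 ^ t)) dvdn_pmul2r //.
  by rewrite pfactor_dvdn // Hx ltnn.
have ou := oddx p erefl.
have ov := oddx q (esym E).
set u := p.+1 %/ 2 ^ t in ou.
set v := q.+1 %/ 2 ^ t in ov.
have pu : p.+1 = u * 2 ^ t by rewrite divnK.
have qv : q.+1 = v * 2 ^ t by rewrite divnK.
have uv : u < v.
  by rewrite -(ltn_pmul2r T0) -pu -qv.
have uv2 : u.+1 < v.
  rewrite ltn_neqAle uv andbT; apply/eqP => e; move: ov; by rewrite -e /= ou.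
exists (u.+1 * 2 ^ t).-1.
have pos : 0 < u.+1 * 2 ^ t by rewrite muln_gt0.
rewrite prednK //; split.
  apply/andP; split.
    have : u * 2 ^ t < u.+1 * 2 ^ t by rewrite ltn_pmul2r.
    lia.
  have : u.+1 * 2 ^ t < v * 2 ^ t by rewrite ltn_pmul2r.
  lia.
rewrite -/t -pfactor_dvdn // expnSr (mulnC (2 ^ t)) dvdn_pmul2r // dvdn2 /= negbK //.
Qed.

Definition badb m N (a : nat -> 'I_m) (p q : nat) : bool :=
  [&& p < q, a p == a q & [forall r : 'I_N, (p < r < q) ==> (a r < a p)]].

Lemma badb_ext m N (a a' : nat -> 'I_m) : (forall r, r < N -> a r = a' r) ->
  forall p q : 'I_N, badb N a p q = badb N a' p q.
Proof.
move=> H p q; rewrite /badb !H //; congr [&& _, _ & _].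
by apply: eq_forallb => r; rewrite !H.
Qed.

Definition tO k (s : seq 'I_k.+1) : 'I_k.+1 * bool :=
  let a' := fun r => nth ord0 s r in
  match [pick pq : 'I_(2^k.+1) * 'I_(2^k.+1) | badb (2^k.+1) a' pq.1 pq.2] with
  | Some pq => (a' pq.1, size s - 2^k.+1 == pq.1)
  | None => (ord0, false)
  end.

Definition fO k (i : nat) := if i == 0 then 2 ^ k.+1 else 1.

Lemma offs_S f i : offs f i.+1 = offs f i + f i.
Proof. by rewrite /offs big_ord_recr. Qed.

Lemma offs0 f : offs f 0 = 0.
Proof. by rewrite /offs big_ord0. Qed.

Lemma offs_fO k i : offs (fO k) i.+1 = 2 ^ k.+1 + i.
Proof.
elim: i => [|i IH]; first by rewrite offs_S offs0 /fO add0n addn0.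
by rewrite offs_S IH /fO /=; lia.
Qed.

Lemma nth_prefix A (x0 : A) a n r : r < n -> nth x0 (Defs.prefix a n) r = a r.
Proof.
move=> rn; rewrite /Defs.prefix (nth_map 0) ?size_iota // nth_iota //.
Qed.

Lemma O_part k : exists f, delay_fun f /\ constant_delay f /\
  O_wins f (dw_lang (Mach k.+1)).
Proof.
exists (fO k); split; first by move=> i; rewrite /fO; case: (i == 0); rewrite ?expn_gt0.
split; first by move=> [|i].
exists (@tO k) => a b Hc.
set N := 2 ^ k.+1.
have Hb : forall i, b i = match [pick pq : 'I_N * 'I_N | badb N a pq.1 pq.2] with
  | Some pq => (a pq.1, i == pq.1) | None => (ord0, false) end.
  move=> i; rewrite Hc offs_fO /tO.
  rewrite (@eq_pick _ _ (fun pq : 'I_N * 'I_N => badb N a pq.1 pq.2)); last first.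
    move=> pq /=; apply: badb_ext => r rN; apply: nth_prefix; lia.
  case: pickP => // pq _; rewrite nth_prefix; last by have := ltn_ord pq.1; rewrite /N; lia.
  by rewrite /Defs.prefix size_map size_iota addKn.
move: Hb; case: pickP => [[p q] /= Hpq | Hnone] Hb; last first.
  have [p [q [h1 h2 h3 h4 h5]]] := @bad_exists k.+1 0 (fun r => nat_of_ord (a r))
     (fun r _ => ltn_ord (a r)).
  have pN : p < N by rewrite /N; lia.
  have qN : q < N by rewrite /N; lia.
  have := Hnone (Ordinal pN, Ordinal qN).
  rewrite /badb /= h2 (val_inj h4) eqxx /=.
  move/negbT/forallPn => [r /=]; rewrite negb_imply => /andP [/andP [r1 r2]].
  move=> /negP H; exfalso; apply: H; move: (h5 r) h4 => /= H5 H4; rewrite -H4; apply: H5; by rewrite r1 r2.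
move: Hpq; rewrite /badb => /and3P [pq /eqP apq /forallP Hr].
have Hlt : forall r, p < r < q -> a r < a p.
  move=> r /andP [r1 r2]; have rN : r < N by have := ltn_ord q; lia.
  by have := Hr (Ordinal rN); rewrite /= r1 r2.
have [j Ej] : {j | a p = j} by exists (a p).
have {}Hb : forall i, b i = (j, i == p) by move=> i; rewrite Hb Ej.
have {}Hlt : forall r, p < r < q -> a r < j by move=> r /Hlt; rewrite Ej.
have {}apq : a q = j by rewrite -apq.
pose spec i : St k.+1 := if i == 0 then None else if i <= p then Some (inl (j, false))
  else if i <= q then Some (inl (j, true)) else Some (inr true).
have Hrun : forall i, dw_run (Mach k.+1) (outcome a b) i = spec i.
  elim => [|i IH] //.
  rewrite /= IH /outcome Hb /spec {IH}.
  have [i0|i0] := posnP i.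
    subst i; rewrite /= /wstep; have [p0|p0] := posnP p.
      have e : a 0 = j by rewrite -Ej p0.
      rewrite p0 e eqxx /=.
      have -> : (j == j) = true by apply/eqP.
      by have -> : 0 < q by lia.
    by rewrite (negbTE (_ : 0 != p)) ?p0 //; lia.
  have jj : (j == j) = true by apply/eqP.
  case: (ltngtP i p) => ip /=.
  - by [].
  - case: (ltngtP i q) => iq /=.
    + by rewrite Hlt // ip iq.
    + by [].
    + by rewrite iq apq ltnn jj.
  - by rewrite ip Ej jj pq.
have jj : (j == j) = true by apply/eqP.
have qp0 : q != 0 :> nat by lia.
have qp : (q <= p) = false by apply/negbTE; lia.
have Hsome : forall i, (i <= p) -> i != 0 -> spec i = Some (inl (j, false)).
  by move=> i ip i0; rewrite /spec (negbTE i0) ip.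
have Hq : spec q = Some (inl (j, true)) by rewrite /spec (negbTE qp0) qp leqnn.
have Hq1 : spec q.+1 = Some (inr true).
  rewrite /spec /= (negbTE (_ : ~~ (q < p))); last lia.
  by rewrite ltnn.
have [p0|p0] := posnP p.
  exists (A2 j).
    by rewrite inE; apply/orP; right; apply/imsetP; exists j.
  move=> x; split.
    rewrite !inE => /orP [/orP [] |] /eqP ->.
    - by exists 0.
    - by exists q; rewrite Hrun.
    - by exists q.+1; rewrite Hrun.
  move=> [i <-]; rewrite Hrun /spec; case: ifP => i0; first by rewrite !inE eqxx.
  rewrite p0; case: ifP => i1; first by exfalso; move/negbT: i0; lia.
  by case: ifP => _; rewrite !inE eqxx ?orbT.
exists (A1 j).
  by rewrite inE; apply/orP; left; apply/imsetP; exists j.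
move=> x; split.
  rewrite !inE => /orP [/orP [/orP [] |] |] /eqP ->.
  - by exists 0.
  - by exists p; rewrite Hrun Hsome // -lt0n.
  - by exists q; rewrite Hrun.
  - by exists q.+1; rewrite Hrun.
move=> [i <-]; rewrite Hrun /spec; case: ifP => _; first by rewrite !inE eqxx.
by case: ifP => _; [|case: ifP => _]; rewrite !inE eqxx ?orbT.
Qed.

Definition ruler n (p : nat) : 'I_n.+1 := inord (logn 2 p.+1).
Definition kill n (j : 'I_n.+1) : 'I_n.+1 := if j == ord0 then inord 1 else ord0.
Definition Lt n (w : seq ('I_n.+1 * bool)) (p : nat) : 'I_n.+1 :=
  if w is b0 :: _ then kill b0.1 else ruler n p.
Definition tI n (g : nat -> nat) (w : seq ('I_n.+1 * bool)) : seq 'I_n.+1 :=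
  map (Lt w) (iota (offs g (size w)) (g (size w))).

Lemma block g : delay_fun g -> forall p, exists i, offs g i <= p < offs g i.+1.
Proof.
move=> dg; elim => [|p [i /andP [h1 h2]]].
  by exists 0; rewrite offs_S offs0 add0n dg.
case: (ltngtP p.+1 (offs g i.+1)) => h3.
- by exists i; rewrite h3 andbT; lia.
- lia.
- exists i.+1; rewrite [offs g i.+2]offs_S -h3; have := dg i.+1; lia.
Qed.

Lemma offs_ge g i : g 0 <= offs g i.+1.
Proof. by rewrite /offs big_ord_recl leq_addr. Qed.

Lemma ruler_val n p : p < 2 ^ n -> nat_of_ord (ruler n p) = logn 2 p.+1.
Proof.
move=> pn; rewrite /ruler inordK // ltnS.
have : 2 ^ logn 2 p.+1 <= p.+1 by apply: dvdn_leq => //; apply: pfactor_dvdnn.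
move=> h; rewrite -(@leq_exp2l 2) //; lia.
Qed.

Lemma kill_neq n (j : 'I_n.+1) : 0 < n -> kill j != j.
Proof.
move=> n0; rewrite /kill; case: ifP => /eqP.
  by move=> ->; apply/eqP => /(congr1 val); rewrite /= inordK.
by move=> h; apply/eqP => e; apply: h.
Qed.

Lemma I_part n : 0 < n -> forall g, delay_fun g -> g 0 <= 2 ^ n ->
  I_wins g (dw_lang (Mach n.+1)).
Proof.
move=> n0 g dg g0.
exists (tI g); split; first by move=> w; rewrite /tI size_map size_iota.
move=> a b Hc.
set j := (b 0).1.
have Ha : forall p, a p = if p < g 0 then ruler n p else kill j.
  move=> p; have [i /andP [h1 h2]] := block dg p.
  have := Hc i; rewrite /tI /Defs.prefix size_map size_iota /slice => /eq_in_map.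
  move=> /(_ p); rewrite mem_iota h1 -offs_S h2 => /(_ isT) <-.
  case: i h1 h2 => [|i] h1 h2 /=.
    by move: h2; rewrite offs_S offs0 add0n => ->.
  have gp : g 0 <= p by have := offs_ge g i; lia.
  by rewrite ltnNge gp.
have nobad : forall p q, p < q -> a p = j -> a q = j ->
    (forall r, p < r < q -> a r < j) -> False.
  move=> p q pq ap aq Hr.
  have qg : q < g 0.
    move: aq; rewrite Ha; case: ifP => [h _ //|_ e].
    by move: (kill_neq j n0); rewrite e eqxx.
  have pg : p < g 0 by lia.
  move: ap aq; rewrite !Ha pg qg => ap aq.
  have E : logn 2 p.+1 = logn 2 q.+1.
    have pn : p < 2 ^ n by lia.
    have qn : q < 2 ^ n by lia.
    by rewrite -(ruler_val pn) -(ruler_val qn) ap aq.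
  have [r [/andP [r1 r2] lr]] := ruler_sep pq E.
  have := Hr r; rewrite r1 r2 => /(_ isT).
  rewrite Ha (_ : r < g 0); last lia.
  have pn : p < 2 ^ n by lia.
  have rn : r < 2 ^ n by lia.
  rewrite -ap (ruler_val pn) (ruler_val rn); lia.
pose R i := dw_run (Mach n.+1) (outcome a b) i.
have Inv : forall i, 0 < i ->
  R i = Some (inl (j,false)) \/ R i = Some (inr false) \/
  (R i = Some (inl (j,true)) /\ exists p, p < i /\ a p = j /\
      forall r, p < r < i -> a r < j).
  elim => [//|i IH] _.
  have [i0|i0] := posnP i.
    subst i; rewrite /R /= /wstep -/j /outcome /=.
    case: (b 0).2; last by left.
    case: eqP => e; last by right; left.
    right; right; split => //; exists 0; split => //; split => // r; lia.
  have : R i.+1 = trans (R i) (a i, b i) by [].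
  move=> ->.
  case: (IH i0) => [->|[->|[-> [p [pi [ap Hr]]]]]] /=.
  - rewrite /wstep; case: (b i).2; last by left.
    case: eqP => e; last by right; left.
    right; right; split => //; exists i; split => //; split => // r; lia.
  - by right; left.
  - case: ifP => lt.
      right; right; split => //; exists p; split; first lia.
      split => // r /andP [r1 r2].
      have [ri|ri] := ltnP r i; first by apply: Hr; rewrite r1 ri.
      have -> : r = i by lia.
      by [].
    case: eqP => e; last by right; left.
    by exfalso; apply: (nobad p i).
move=> [S SF HS].
have [i ri] := (HS _).1 (acc_in SF).
have [i0|i0] := posnP i; first by rewrite i0 in ri.
by case: (Inv i i0) => [|[|[]]]; rewrite /R ri.
Qed.

Theorem corollary1 :
  exists c : nat, forall n : nat, 0 < n ->
    exists (SI SO : finType) (M : DWMA (SI * SO)),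
      dw_size M <= c * n /\
      (exists f, delay_fun f /\ constant_delay f /\ O_wins f (dw_lang M)) /\
      (forall g, delay_fun g -> g 0 <= 2 ^ n -> I_wins g (dw_lang M)).
Proof.
exists 11 => n n0.
exists 'I_n.+1, ('I_n.+1 * bool)%type, (Mach n.+1).
split; first by move: (size_Mach n.+1); move: (dw_size _) => s hs; lia.
split; first exact: (O_part n).
exact: I_part.
Qed.
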